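(* Let $G$ be a graph on $n$ vertices. Then $\mathcal{Z}^{\mathrm{TE}}_-(G)\cong K_n$ if and only if $\mathrm{Z}_-(G)=1$ and every singleton subset of $V(G)$ is a skew forcing set of $G$.
   Context: Skew forcing: vertices are colored blue or white; if any vertex $u$ (blue or white) has exactly one white neighbor $v$, then $u$ may force $v$ to become blue. A skew forcing set is a (possibly empty) set of initially blue vertices from which repeated application of this rule turns every vertex blue; $\mathrm{Z}_-(G)$ is the minimum size of a skew forcing set. $\mathcal{Z}^{\mathrm{TE}}_-(G)$ has as vertices the minimum skew forcing sets of $G$, with $S_1S_2$ an edge iff $S_1\setminus S_2=\{v_1\}$ and $S_2\setminus S_1=\{v_2\}$ for some vertices $v_1,v_2$. *)

(* Defs.v *)
From mathcomp Require Import all_boot.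
Set Implicit Arguments. Unset Strict Implicit. Unset Printing Implicit Defensive.

Section Skew.
Variables (T : finType) (e : rel T).

Definition simple_graph := symmetric e /\ irreflexive e.

Definition nbhd (u : T) : {set T} := [set w | e u w].

(* [skew_derivable B C]: starting from blue set B, the blue set C can be reached
   by repeated application of the skew forcing rule: any vertex u (blue or
   white) whose set of white neighbours is exactly {v} forces v blue. *)
Inductive skew_derivable (B : {set T}) : {set T} -> Prop :=
| sd_refl : skew_derivable B B
| sd_step (C : {set T}) (u v : T) :
    skew_derivable B C -> nbhd u :\: C = [set v] -> skew_derivable B (v |: C).

Definition skew_forcing_set (S : {set T}) : Prop := skew_derivable S [set: T].

Definition skew_forcing_number_is (k : nat) : Prop :=
  (exists S, skew_forcing_set S /\ #|S| = k) /\
  (forall S, skew_forcing_set S -> k <= #|S|).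

Definition min_skew_forcing_set (S : {set T}) : Prop :=
  skew_forcing_set S /\ (forall S', skew_forcing_set S' -> #|S| <= #|S'|).

Definition TE_adj (S1 S2 : {set T}) : Prop :=
  exists v1 v2 : T, S1 :\: S2 = [set v1] /\ S2 :\: S1 = [set v2].

(* Z^TE_-(G) is isomorphic to the complete graph K_m: a bijection f from 'I_m
   onto the vertex set (minimum skew forcing sets) such that f i, f j are
   adjacent iff i <> j. *)
Definition TE_iso_complete (m : nat) : Prop :=
  exists f : 'I_m -> {set T},
    injective f /\
    (forall S, min_skew_forcing_set S <-> exists i, f i = S) /\
    (forall i j, TE_adj (f i) (f j) <-> i <> j).

End Skew.

(* Main.v *)
Require Import Defs.
From mathcomp Require Import all_boot.
From mathcomp Require Import zify.
Set Implicit Arguments. Unset Strict Implicit.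

Lemma two_in (T : finType) (A : {set T}) x y :
  x \in A -> y \in A -> x != y -> 1 < #|A|.
Proof.
move=> xA yA xy.
have: [set x; y] \subset A by apply/subsetP=> z; rewrite !inE => /orP[]/eqP->.
by move/subset_leq_card; rewrite cards2 xy.
Qed.

Lemma inj_bound (T : finType) n (g : 'I_n -> T) (A : {set T}) :
  injective g -> (forall i, g i \in A) -> n <= #|A|.
Proof.
move=> ginj gA.
have <- : #|[set g i | i in [set: 'I_n]]| = n by rewrite card_imset // cardsT card_ord.
apply: subset_leq_card; apply/subsetP=> x /imsetP[i _ ->]; exact: gA.
Qed.

Lemma family_bound (T : finType) n (f : 'I_n -> {set T}) k (i0 i1 : 'I_n) :
  #|T| <= n -> injective f -> (forall i, #|f i| = k) ->
  (forall i j, #|f i :\: f j| <= 1) -> i0 != i1 -> k <= 1 \/ n <= k.+1.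
Proof.
move=> hn finj hk D i01.
have D1 i j : i != j -> #|f i :\: f j| = 1.
  move=> ij; apply/eqP; rewrite eqn_leq D /=.
  case: (set_0Vmem (f i :\: f j)) => [h|[x hx]]; last by rewrite card_gt0; apply/set0Pn; exists x.
  have: f i == f j by rewrite eqEcard -setD_eq0 h eqxx !hk leqnn.
  by move/eqP/finj/eqP; rewrite (negbTE ij).
set S1 := f i0; set S2 := f i1.
set I := S1 :&: S2; set U := S1 :|: S2.
have cI : #|I| + 1 = k by rewrite -(D1 _ _ i01) cardsID hk.
have cU : #|U| = k.+1.
  rewrite /U cardsU -/I. have h1 := hk i0. have h2 := hk i1. rewrite -/S1 -/S2 in h1 h2. rewrite h1 h2. lia.
have [a ha] : exists a, S1 :\: S2 = [set a] by apply/cards1P/eqP/D1.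
have aS1 : a \in S1 by move: (set11 a); rewrite -ha inE => /andP[].
have aS2 : a \notin S2 by move: (set11 a); rewrite -ha inE => /andP[].
have claim i : I \subset f i \/ f i \subset U.
  case: (boolP (I \subset f i)) => hI; [by left|right].
  have [x xI xf] := subsetPn hI.
  move: xI; rewrite inE => /andP[xS1 xS2].
  have af : a \in f i.
    apply/negPn/negP=> af.
    have := two_in (A := S1 :\: f i) (x := x) (y := a).
    rewrite !inE xS1 aS1 xf af /= => /(_ isT isT).
    have -> : x != a by apply/eqP=> xa; move: aS2; rewrite -xa xS2.
    by move/(_ isT); rewrite ltnNge D.
  apply/subsetP=> y yf; apply/negPn/negP=> yU.
  have := two_in (A := f i :\: S2) (x := y) (y := a).
  move: yU; rewrite !inE negb_or => /andP[yS1 yS2].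
  rewrite yS2 yf af (negbTE aS2) /= => /(_ isT isT).
  have -> : y != a by apply/eqP=> ya; move: yS1; rewrite ya aS1.
  by move/(_ isT); rewrite ltnNge D.
case: (boolP [forall i, I \subset f i]) => [/forallP hall|/forallPn [i hi]].
- left.
  have c1 i : #|f i :\: I| = 1 by rewrite cardsDS ?hall // hk; lia.
  pose g i := odflt a [pick x in f i :\: I].
  have hg i : f i :\: I = [set g i].
    have [x hx] : exists x, f i :\: I = [set x] by apply/cards1P/eqP/c1.
    rewrite /g hx; case: pickP => [y|]; first by rewrite inE => /eqP->.
    by move/(_ x); rewrite inE eqxx.
  have ginj : injective g.
    move=> i j gij; apply: finj.
    by rewrite -(setID (f i) I) -(setID (f j) I) (setIidPr (hall i)) (setIidPr (hall j)) !hg gij.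
  have := inj_bound (A := ~: I) ginj.
  have gI i : g i \in ~: I by move: (set11 (g i)); rewrite -hg !inE => /andP[].
  move/(_ gI); have := cardsC I; lia.
- right.
  have hsub j : f j \subset U.
    case: (claim j) => // hIj.
    case: (claim i) => [hIi|hiU]; first by move: hi; rewrite hIi.
    apply/subsetP=> y yf; apply/negPn/negP=> yU.
    have [z zI zf] := subsetPn hi.
    have := two_in (A := f j :\: f i) (x := z) (y := y).
    rewrite !inE zf (subsetP hIj _ zI) yf /=.
    have -> : y \notin f i by apply/negP=> /(subsetP hiU); apply/negP.
    move=> /(_ isT isT).
    have -> : z != y by apply/eqP=> zy; move: yU; rewrite -zy; move: zI; rewrite !inE => /andP[->].
    by move/(_ isT); rewrite ltnNge D.
  have c1 j : #|U :\: f j| = 1 by rewrite cardsDS ?hsub // hk cU; lia.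
  pose g j := odflt a [pick x in U :\: f j].
  have hg j : U :\: f j = [set g j].
    have [x hx] : exists x, U :\: f j = [set x] by apply/cards1P/eqP/c1.
    rewrite /g hx; case: pickP => [y|]; first by rewrite inE => /eqP->.
    by move/(_ x); rewrite inE eqxx.
  have ginj : injective g.
    move=> i1' j gij; apply: finj.
    have e1 : f i1' = U :\: (U :\: f i1') by rewrite setDDr setDv set0U (setIidPr (hsub _)).
    have e2 : f j = U :\: (U :\: f j) by rewrite setDDr setDv set0U (setIidPr (hsub _)).
    by rewrite e1 e2 !hg gij.
  have gU j : g j \in U by move: (set11 (g j)); rewrite -hg inE => /andP[].
  by rewrite -cU; apply: inj_bound ginj gU.
Qed.

Lemma deriv_edge (T : finType) (e : rel T) B C :
  skew_derivable e B C -> forall x, x \in C -> x \in B \/ exists u, e u x.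
Proof.
elim=> [|C' u v _ IH h] x //; first by left.
rewrite in_setU1 => /orP[/eqP->|xC]; last exact: IH.
right; exists u; move: (set11 v); rewrite -h !inE => /andP[_]; by [].
Qed.

Lemma setD11 (T : finType) (a b : T) : a != b -> [set a] :\: [set b] = [set a].
Proof.
move=> ab; apply/setP=> x; rewrite !inE.
by have [->|] := eqVneq x a; rewrite ?andbT ?andbF.
Qed.

Theorem proposition5p12 (T : finType) (e : rel T) :
  simple_graph e ->
  (TE_iso_complete e #|T| <->
   (skew_forcing_number_is e 1 /\ forall v : T, skew_forcing_set e [set v])).
Proof.
move=> [esymm eirr]; split.
- case=> f [finj [fmin fadj]].
  have hmin i : min_skew_forcing_set e (f i) by apply/fmin; exists i.
  have D i j : #|f i :\: f j| <= 1.
    case: (eqVneq i j) => [->|ij]; first by rewrite setDv cards0.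
    have ij' : i <> j by apply/eqP.
    by have [v1 [v2 [-> _]]] := (fadj i j).2 ij'; rewrite cards1.
  case: (posnP #|T|) => [T0|npos].
    have hT : [set: T] = set0.
      apply/setP=> x; exfalso; move: T0; apply/eqP; rewrite -lt0n.
      by apply/card_gt0P; exists x.
    have : min_skew_forcing_set e set0.
      by split; [rewrite /skew_forcing_set hT; constructor | move=> *; rewrite cards0].
    by move/fmin => [i _]; have := ltn_ord i; rewrite {2}T0.
  pose i0 := Ordinal npos.
  pose k := #|f i0|.
  have hk i : #|f i| = k.
    apply/eqP; rewrite eqn_leq ((hmin i).2 _ (hmin i0).1).
    by rewrite ((hmin i0).2 _ (hmin i).1).
  have kT : k <= #|T| by rewrite /k; apply: max_card.
  have k0 : k != 0.
    apply/eqP=> k0.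
    have f0 : f i0 = set0 by apply/eqP; rewrite -cards_eq0; apply/eqP; exact: k0.
    have [x _] : exists x : T, true by have := npos; move/card_gt0P => [x _]; exists x.
    have := deriv_edge (hmin i0).1 (in_setT x); rewrite f0 inE.
    case=> // [[u eux]].
    have n2 : 1 < #|T|.
      have := two_in (in_setT u) (in_setT x); rewrite cardsT; apply.
      by apply/eqP=> ux; move: eux; rewrite ux eirr.
    pose i1 := Ordinal n2.
    have : f i1 = f i0 by rewrite f0; apply/eqP; rewrite -cards_eq0 hk k0.
    by move/finj.
  have k1 : k = 1.
    case: (ltnP 1 #|T|) => [n2|n1]; last by lia.
    pose i1 := Ordinal n2.
    have i01 : i0 != i1 by [].
    case: (family_bound (leqnn _) finj hk D i01) => [|nle]; first by lia.
    case: (leqP k 1) => [|k2]; first by lia.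
    have fT i : k = #|T| -> f i = setT.
      by move=> kn; apply/eqP; rewrite eqEcard subsetT cardsT hk kn leqnn.
    case: (eqVneq k #|T|) => [kn|kn].
      by move: i01; rewrite (finj i0 i1 (etrans (fT i0 kn) (esym (fT i1 kn)))) eqxx.
    case: (boolP [exists u, exists w, e u w]) => [/existsP[u /existsP[w euw]]|noedge].
      have uw : u != w by apply/eqP=> uw; move: euw; rewrite uw eirr.
      have hS : skew_forcing_set e (~: [set u; w]).
        have s1 : nbhd e u :\: ~: [set u; w] = [set w].
          apply/setP=> x; rewrite !inE negbK.
          have [->|xw] := eqVneq x w; first by rewrite euw orbT.
          by rewrite orbF; have [->|] := eqVneq x u; rewrite ?eirr.
        have s2 : nbhd e w :\: (w |: ~: [set u; w]) = [set u].
          apply/setP=> x; rewrite !inE.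
          have [->|xu] := eqVneq x u; first by rewrite (negbTE uw) /= esymm.
          by have [->|] := eqVneq x w; rewrite ?eirr /= ?orbT ?andbF.
        rewrite /skew_forcing_set; have -> : [set: T] = u |: (w |: ~: [set u; w]).
          by apply/setP=> x; rewrite !inE; case: (x == u); case: (x == w).
        by apply: sd_step s2; apply: sd_step s1; constructor.
      have := (hmin i0).2 _ hS; rewrite -/k.
      have kn2 : k < #|T| by rewrite ltn_neqAle kn kT.
      have := cardsC [set u; w]; rewrite cards2 uw /=; move=> h1 h2; move: h1 h2 nle kn2; clear; set n := #|T|; set c := #|~: _|; move=> h1 h2 h3 h4; change (2 + c = n) in h1; lia.
    have : f i0 = setT.
      apply/setP=> x; rewrite inE.
      case: (deriv_edge (hmin i0).1 (in_setT x)) => // [[u eux]].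
      by move: noedge; rewrite negb_exists => /forallP/(_ u); rewrite negb_exists => /forallP/(_ x); rewrite eux.
    by move=> fT0; move: kn; rewrite /k fT0 cardsT eqxx.
  split.
    split; first by exists (f i0); split; [exact: (hmin i0).1 | exact: k1].
    by move=> S hS; rewrite -k1; apply: (hmin i0).2.
  pose g i := odflt (enum_val i) [pick x in f i].
  have hg i : f i = [set g i].
    have [x hx] : exists x, f i = [set x] by apply/cards1P; rewrite hk k1.
    rewrite /g hx; case: pickP => [y|]; first by rewrite inE => /eqP->.
    by move/(_ x); rewrite inE eqxx.
  have ginj : injective g by move=> i j gij; apply: finj; rewrite !hg gij.
  have him : [set g i | i in [set: 'I_#|T|]] = setT.
    apply/eqP; rewrite eqEcard subsetT /= card_imset // !cardsT; exact: (eq_leq (esym (card_ord _))).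
  move=> v; have : v \in [set g i | i in [set: 'I_#|T|]] by rewrite him.
  by case/imsetP=> i _ ->; rewrite -hg; exact: (hmin i).1.
- case=> [[[S0 [hS0 cS0]] hZ] hsing].
  exists (fun i : 'I_#|T| => [set enum_val i]).
  split; first by move=> i j /set1_inj /enum_val_inj.
  split.
    move=> S; split.
      case=> hS hm.
      have S1 : 0 < #|S| by apply: hZ.
      have [v _] : exists v, v \in S by apply/card_gt0P.
      have : #|S| == 1 by rewrite eqn_leq S1 andbT; have := hm _ (hsing v); rewrite cards1.
      by case/cards1P=> x ->; exists (enum_rank x); rewrite enum_rankK.
    by case=> i <-; split; [exact: hsing | move=> S' /hZ; rewrite cards1].
  move=> i j; split.
    case=> v1 [v2 [h _]] ij; subst j; rewrite setDv in h.
    by move: (set11 v1); rewrite -h inE.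
  move=> ij; have ne : enum_val i != enum_val j by apply/eqP=> /enum_val_inj.
  exists (enum_val i), (enum_val j); rewrite !setD11 // eq_sym //.
Qed.
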